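(* Let $G$ and $H$ be graphs without isolated vertices. Then the Kronecker double coverings $K_2 \times G$ and $K_2 \times H$ are isomorphic as graphs if and only if the box complexes $B(G)$ and $B(H)$ are isomorphic as posets (ignoring the involutions).
   Context: A graph $G$ is a set $V(G)$ together with a symmetric subset $E(G) \subset V(G)\times V(G)$ (undirected, no multiple edges, loops allowed; graphs may be infinite). For $v \in V(G)$, $N(v)=\{w : (v,w)\in E(G)\}$; $v$ is isolated if $N(v)=\emptyset$. $K_2$ is the graph with $V(K_2)=\{1,2\}$ and $E(K_2)=\{(1,2),(2,1)\}$. The (tensor) product $G\times H$ has vertex set $V(G)\times V(H)$, with $((x,y),(x',y'))$ an edge iff $(x,x')\in E(G)$ and $(y,y')\in E(H)$; $K_2\times G$ is the Kronecker double covering of $G$. The box complex $B(G)$ is the poset of all pairs $(\sigma,\tau)$ of non-empty (possibly infinite) subsets of $V(G)$ with $\sigma\times\tau\subset E(G)$, ordered by $(\sigma,\tau)\le(\sigma',\tau')$ iff $\sigma\subset\sigma'$ and $\tau\subset\tau'$, and equipped with the involution $(\sigma,\tau)\leftrightarrow(\tau,\sigma)$. *)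

(* Defs.v *)
(* graphs may be infinite, so vertex sets are arbitrary Types
   and subsets are predicates V -> Prop. *)

Record graph := Graph {
  vtx : Type;
  edge : vtx -> vtx -> Prop;
  edge_sym : forall x y, edge x y -> edge y x
}.

Definition no_isolated (G : graph) : Prop :=
  forall v : vtx G, exists w, edge G v w.

Definition K2 : graph.
Proof.
  refine (@Graph bool (fun a b => a <> b) _).
  intros x y H E; apply H; symmetry; exact E.
Defined.

Definition tensor (G H : graph) : graph.
Proof.
  refine (@Graph (vtx G * vtx H)
            (fun p q => edge G (fst p) (fst q) /\ edge H (snd p) (snd q)) _).
  intros [x y] [x' y'] [H1 H2]; split; apply edge_sym; assumption.
Defined.

Definition graph_iso (G H : graph) : Prop :=
  exists (f : vtx G -> vtx H) (g : vtx H -> vtx G),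
    (forall x, g (f x) = x) /\ (forall y, f (g y) = y) /\
    (forall x y, edge G x y <-> edge H (f x) (f y)).

Definition box (G : graph) : Type :=
  { p : (vtx G -> Prop) * (vtx G -> Prop) |
      (exists x, fst p x) /\ (exists y, snd p y) /\
      (forall x y, fst p x -> snd p y -> edge G x y) }.

Definition box_le (G : graph) (a b : box G) : Prop :=
  (forall x, fst (proj1_sig a) x -> fst (proj1_sig b) x) /\
  (forall x, snd (proj1_sig a) x -> snd (proj1_sig b) x).

Definition box_poset_iso (G H : graph) : Prop :=
  exists (f : box G -> box H) (g : box H -> box G),
    (forall a, g (f a) = a) /\ (forall b, f (g b) = b) /\
    (forall a b, box_le G a b <-> box_le H (f a) (f b)).

(* Main.v *)
Require Import Defs.
From Stdlib Require Import Classical FunctionalExtensionality PropExtensionality ProofIrrelevance IndefiniteDescription Bool.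

Definition bS {G : graph} (a : box G) (u : bool * vtx G) : Prop :=
  if fst u then fst (proj1_sig a) (snd u) else snd (proj1_sig a) (snd u).

Lemma box_ext (G : graph) (a b : box G) :
  (forall z, fst (proj1_sig a) z <-> fst (proj1_sig b) z) ->
  (forall z, snd (proj1_sig a) z <-> snd (proj1_sig b) z) -> a = b.
Proof.
  destruct a as [[s t] pa], b as [[s' t'] pb]; simpl; intros Hs Ht.
  assert (s = s') by (apply functional_extensionality; intro; apply propositional_extensionality; auto).
  assert (t = t') by (apply functional_extensionality; intro; apply propositional_extensionality; auto).
  subst. f_equal. apply proof_irrelevance.
Qed.

Lemma box_ext_S (G : graph) (a b : box G) : (forall u, bS a u <-> bS b u) -> a = b.
Proof. intro H; apply box_ext; intro z; [exact (H (true,z)) | exact (H (false,z))]. Qed.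

Lemma box_le_S (G : graph) (a b : box G) : box_le G a b <-> forall u, bS a u -> bS b u.
Proof.
  split.
  - intros [H1 H2] [[|] z]; unfold bS; simpl; auto.
  - intro H; split; intro z; [apply (H (true,z)) | apply (H (false,z))].
Qed.

Lemma box_prop (G : graph) (a : box G) :
  (exists x, fst (proj1_sig a) x) /\ (exists y, snd (proj1_sig a) y) /\
  (forall x y, fst (proj1_sig a) x -> snd (proj1_sig a) y -> edge G x y).
Proof. exact (proj2_sig a). Qed.

Definition XE (G : graph) (p q : bool * vtx G) : Prop := fst p <> fst q /\ edge G (snd p) (snd q).

Lemma XE_eq (G : graph) (p q : vtx (tensor K2 G)) : edge (tensor K2 G) p q <-> XE G p q.
Proof. unfold XE; simpl; tauto. Qed.

Definition isoX (G H : graph) (f : bool * vtx G -> bool * vtx H) (g : bool * vtx H -> bool * vtx G) :=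
  (forall x, g (f x) = x) /\ (forall y, f (g y) = y) /\ (forall x y, XE G x y <-> XE H (f x) (f y)).

Lemma isoX_inv G H f g : isoX G H f g -> isoX H G g f.
Proof.
  intros [h1 [h2 h3]]; split; [|split]; auto.
  intros x y. rewrite (h3 (g x) (g y)), !h2. tauto.
Qed.

Lemma opp_edge (G : graph) (a : box G) u1 u2 : bS a u1 -> bS a u2 -> fst u1 <> fst u2 -> XE G u1 u2.
Proof.
  destruct (box_prop G a) as [_ [_ He]].
  destruct u1 as [[|] x1], u2 as [[|] x2]; unfold bS, XE; simpl; intros h1 h2 hn;
    try congruence; split; try discriminate; auto.
  apply edge_sym; auto.
Qed.

Lemma bS_other (G : graph) (a : box G) b : exists u, bS a u /\ fst u = b.
Proof.
  destruct (box_prop G a) as [[x hx] [[y hy] _]].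
  destruct b; [exists (true,x) | exists (false,y)]; auto.
Qed.

Lemma same_side G H f g (hi : isoX G H f g) (a : box G) u1 u2 :
  bS a u1 -> bS a u2 -> fst u1 = fst u2 -> fst (f u1) = fst (f u2).
Proof.
  intros h1 h2 e. destruct hi as [_ [_ h3]].
  destruct (bS_other G a (negb (fst u1))) as [u3 [h4 e3]].
  assert (XE G u1 u3) as E1 by (apply (opp_edge G a); auto; rewrite e3; destruct (fst u1); discriminate).
  assert (XE G u2 u3) as E2 by (apply (opp_edge G a); auto; rewrite e3, <- e; destruct (fst u1); discriminate).
  apply h3 in E1; apply h3 in E2. destruct E1 as [n1 _], E2 as [n2 _].
  destruct (fst (f u1)), (fst (f u2)), (fst (f u3)); congruence.
Qed.

Definition Fset G H (g : bool * vtx H -> bool * vtx G) (a : box G) : (vtx H -> Prop) * (vtx H -> Prop) :=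
  (fun y => bS a (g (true, y)), fun y => bS a (g (false, y))).

Lemma Fne G H f g (hi : isoX G H f g) (a : box G) b : exists y, bS a (g (b, y)).
Proof.
  destruct (bS_other G a true) as [u1 [k1 e1]], (bS_other G a false) as [u2 [k2 e2]].
  assert (XE G u1 u2) as E by (apply (opp_edge G a); auto; congruence).
  destruct hi as [h1 [h2 h3]]. apply h3 in E. destruct E as [n _].
  destruct (bool_dec (fst (f u1)) b) as [e|e].
  - exists (snd (f u1)). rewrite <- e, <- surjective_pairing, h1; auto.
  - assert (fst (f u2) = b) as e' by (destruct (fst (f u1)), (fst (f u2)), b; congruence).
    exists (snd (f u2)). rewrite <- e', <- surjective_pairing, h1; auto.
Qed.

Lemma Fprop G H f g (hi : isoX G H f g) (a : box G) :
  (exists x, fst (Fset G H g a) x) /\ (exists y, snd (Fset G H g a) y) /\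
  (forall x y, fst (Fset G H g a) x -> snd (Fset G H g a) y -> edge H x y).
Proof.
  split; [|split].
  - apply (Fne G H f g hi a true).
  - apply (Fne G H f g hi a false).
  - simpl; intros x y hx hy.
    assert (fst (g (true, x)) <> fst (g (false, y))) as hn.
    { intro e. pose proof (same_side G H f g hi a _ _ hx hy e) as e'.
      destruct hi as [_ [h2 _]]. rewrite !h2 in e'. discriminate. }
    pose proof (opp_edge G a _ _ hx hy hn) as E.
    destruct hi as [_ [h2 h3]]. apply h3 in E. rewrite !h2 in E. apply E.
Qed.

Definition Fb G H f g (hi : isoX G H f g) (a : box G) : box H :=
  exist _ (Fset G H g a) (Fprop G H f g hi a).

Lemma bS_Fb G H f g (hi : isoX G H f g) a w : bS (Fb G H f g hi a) w <-> bS a (g w).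
Proof. destruct w as [[|] y]; simpl; tauto. Qed.

Lemma dir1 (G H : graph) : graph_iso (tensor K2 G) (tensor K2 H) -> box_poset_iso G H.
Proof.
  intros [f [g [h1 [h2 h3]]]].
  assert (hi : isoX G H f g).
  { split; [exact h1|split; [exact h2|]]. intros x y. rewrite <- !XE_eq. apply h3. }
  pose proof (isoX_inv _ _ _ _ hi) as hi'.
  exists (Fb G H f g hi), (Fb H G g f hi'). split; [|split].
  - intro a; apply box_ext_S; intro u. rewrite !bS_Fb, h1. tauto.
  - intro a; apply box_ext_S; intro u. rewrite !bS_Fb, h2. tauto.
  - intros a b; rewrite !box_le_S. split; intros Hab u.
    + rewrite !bS_Fb; auto.
    + specialize (Hab (f u)). rewrite !bS_Fb, h1 in Hab. auto.
Qed.

Definition minimal {P : Type} (le : P -> P -> Prop) (m : P) := forall b, le b m -> b = m.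
Definition adj {P : Type} (le : P -> P -> Prop) (m m' : P) :=
  minimal le m /\ minimal le m' /\ m <> m' /\
  exists c, le m c /\ le m' c /\ forall n, minimal le n -> le n c -> n = m \/ n = m'.
Definition clique {P : Type} (le : P -> P -> Prop) (S : P -> Prop) :=
  (forall m, S m -> minimal le m) /\ (forall m m', S m -> S m' -> m <> m' -> adj le m m').
Definition star {P : Type} (le : P -> P -> Prop) (S : P -> Prop) :=
  clique le S /\
  (((exists m m', S m /\ S m' /\ m <> m') /\
    (forall T, clique le T -> (forall m, S m -> T m) -> forall m, T m -> S m)) \/
   (exists m, (forall n, S n <-> n = m) /\
      ~ exists m1 m2, adj le m m1 /\ adj le m m2 /\ m1 <> m2 /\ ~ adj le m1 m2)).
Definition ies {P : Type} (le : P -> P -> Prop) (S : P -> Prop) :=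
  exists m, (forall n, S n <-> n = m) /\ ~ exists n, adj le m n.
Definition isoP {P Q : Type} (le1 : P -> P -> Prop) (le2 : Q -> Q -> Prop) (F : P -> Q) (Gi : Q -> P) :=
  (forall a, Gi (F a) = a) /\ (forall b, F (Gi b) = b) /\ (forall a b, le1 a b <-> le2 (F a) (F b)).
Definition img {P Q : Type} (Gi : Q -> P) (S : P -> Prop) : Q -> Prop := fun q => S (Gi q).

Lemma isoP_inv {P Q} le1 le2 (F : P -> Q) Gi : isoP le1 le2 F Gi -> isoP le2 le1 Gi F.
Proof.
  intros [h1 [h2 h3]]; split; [exact h2|split; [exact h1|]].
  intros a b. rewrite (h3 (Gi a) (Gi b)), !h2. tauto.
Qed.

Lemma tr_min {P Q} le1 le2 (F : P -> Q) Gi (hi : isoP le1 le2 F Gi) a :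
  minimal le1 a -> minimal le2 (F a).
Proof.
  destruct hi as [h1 [h2 h3]]. intros Hm b Hb.
  rewrite <- (h2 b) in Hb. apply h3 in Hb. apply Hm in Hb. rewrite <- Hb, h2; auto.
Qed.

Lemma tr_adj {P Q} le1 le2 (F : P -> Q) Gi (hi : isoP le1 le2 F Gi) a b :
  adj le1 a b -> adj le2 (F a) (F b).
Proof.
  intros [ma [mb [ne [c [la [lb hc]]]]]].
  pose proof (isoP_inv _ _ _ _ hi) as hi'.
  destruct hi as [h1 [h2 h3]].
  split; [apply (tr_min le1 le2 F Gi); auto; split; auto|].
  split; [apply (tr_min le1 le2 F Gi); auto; split; auto|].
  split; [intro e; apply ne; rewrite <- (h1 a), e, h1; auto|].
  exists (F c). split; [apply h3; auto|]. split; [apply h3; auto|].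
  intros n mn ln.
  assert (minimal le1 (Gi n)) as mn' by (apply (tr_min le2 le1 Gi F hi'); auto).
  assert (le1 (Gi n) c) as ln' by (apply h3; rewrite h2; auto).
  destruct (hc _ mn' ln') as [e|e]; [left|right]; rewrite <- e, h2; auto.
Qed.

Lemma back_adj {P Q} le1 le2 (F : P -> Q) Gi (hi : isoP le1 le2 F Gi) a b :
  adj le2 (F a) (F b) -> adj le1 a b.
Proof.
  intro H. pose proof (tr_adj le2 le1 Gi F (isoP_inv _ _ _ _ hi) _ _ H) as H'.
  destruct hi as [h1 _]. rewrite !h1 in H'. exact H'.
Qed.

Lemma tr_clique {P Q} le1 le2 (F : P -> Q) Gi (hi : isoP le1 le2 F Gi) S :
  clique le1 S -> clique le2 (img Gi S).
Proof.
  intros [c1 c2]. split.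
  - intros m Hm. pose proof (tr_min le1 le2 F Gi hi _ (c1 _ Hm)) as H.
    destruct hi as [_ [h2 _]]. rewrite h2 in H. exact H.
  - intros m m' Hm Hm' ne.
    assert (Gi m <> Gi m') as ne'.
    { intro e. apply ne. destruct hi as [_ [h2 _]]. rewrite <- (h2 m), e, h2; auto. }
    pose proof (tr_adj le1 le2 F Gi hi _ _ (c2 _ _ Hm Hm' ne')) as H.
    destruct hi as [_ [h2 _]]. rewrite !h2 in H. exact H.
Qed.

Lemma img_img {P Q} le1 le2 (F : P -> Q) Gi (hi : isoP le1 le2 F Gi) S :
  img F (img Gi S) = S.
Proof.
  destruct hi as [h1 _]. apply functional_extensionality; intro p; unfold img. rewrite h1; auto.
Qed.

Lemma tr_star {P Q} le1 le2 (F : P -> Q) Gi (hi : isoP le1 le2 F Gi) S :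
  star le1 S -> star le2 (img Gi S).
Proof.
  pose proof (isoP_inv _ _ _ _ hi) as hi'.
  intros [cl [[[m [m' [Hm [Hm' ne]]]] Hmax] | [m [Hs Hn]]]].
  - split; [apply (tr_clique le1 le2 F Gi hi); auto|]. left. split.
    + destruct hi as [h1 [h2 _]]. exists (F m), (F m'). unfold img; rewrite !h1.
      split; auto. split; auto. intro e. apply ne. rewrite <- (h1 m), e, h1; auto.
    + intros T cT HT q Tq.
      pose proof (tr_clique le2 le1 Gi F hi' T cT) as cT'.
      assert (forall p, S p -> img F T p) as HT'.
      { intros p Sp. unfold img. apply HT. unfold img. destruct hi as [h1 _]. rewrite h1; auto. }
      pose proof (Hmax _ cT' HT' (Gi q)) as Hq. unfold img in *.
      apply Hq. destruct hi as [_ [h2 _]]. rewrite h2; auto.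
  - split; [apply (tr_clique le1 le2 F Gi hi); auto|]. right. exists (F m).
    destruct hi as [h1 [h2 h3]]. split.
    + intro n. unfold img. rewrite Hs. split; intro e; [rewrite <- e, h2 | rewrite e, h1]; auto.
    + intros [m1 [m2 [a1 [a2 [ne nadj]]]]]. apply Hn. exists (Gi m1), (Gi m2).
      rewrite <- (h2 m1) in a1. rewrite <- (h2 m2) in a2.
      split; [apply (back_adj le1 le2 F Gi (conj h1 (conj h2 h3))); auto|].
      split; [apply (back_adj le1 le2 F Gi (conj h1 (conj h2 h3))); auto|].
      split; [intro e; apply ne; rewrite <- (h2 m1), e, h2; auto|].
      intro A. apply nadj. pose proof (tr_adj le1 le2 F Gi (conj h1 (conj h2 h3)) _ _ A) as A'.
      rewrite !h2 in A'. exact A'.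
Qed.

Lemma tr_ies {P Q} le1 le2 (F : P -> Q) Gi (hi : isoP le1 le2 F Gi) S :
  ies le1 S -> ies le2 (img Gi S).
Proof.
  intros [m [Hs Hn]]. exists (F m).
  pose proof hi as hi0. destruct hi as [h1 [h2 h3]]. split.
  - intro n. unfold img. rewrite Hs. split; intro e; [rewrite <- e, h2 | rewrite e, h1]; auto.
  - intros [n A]. apply Hn. exists (Gi n). rewrite <- (h2 n) in A.
    apply (back_adj le1 le2 F Gi hi0); auto.
Qed.

Lemma back_ies {P Q} le1 le2 (F : P -> Q) Gi (hi : isoP le1 le2 F Gi) S :
  ies le2 (img Gi S) -> ies le1 S.
Proof.
  intro H. pose proof (tr_ies le2 le1 Gi F (isoP_inv _ _ _ _ hi) _ H) as H'.
  rewrite (img_img le1 le2 F Gi hi) in H'. exact H'.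
Qed.

Definition isE (G : graph) (x y : vtx G) (a : box G) : Prop :=
  (forall z, fst (proj1_sig a) z <-> z = x) /\ (forall z, snd (proj1_sig a) z <-> z = y).
Definition M (G : graph) (v : bool * vtx G) (a : box G) : Prop :=
  exists y, if fst v then isE G (snd v) y a else isE G y (snd v) a.

Definition mkbox (G : graph) (s t : vtx G -> Prop)
  (h : (exists x, s x) /\ (exists y, t y) /\ (forall x y, s x -> t y -> edge G x y)) : box G :=
  exist _ (s, t) h.

Lemma sing_prop (G : graph) (x y : vtx G) (h : edge G x y) :
  (exists z, z = x) /\ (exists z, z = y) /\ (forall a b, a = x -> b = y -> edge G a b).
Proof. split; [eauto|split; [eauto|]]. intros a b -> ->; exact h. Qed.

Definition sing_box (G : graph) (x y : vtx G) (h : edge G x y) : box G :=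
  mkbox G (fun z => z = x) (fun z => z = y) (sing_prop G x y h).

Lemma isE_sing G x y h : isE G x y (sing_box G x y h).
Proof. split; intro z; simpl; tauto. Qed.

Lemma isE_edge G x y a : isE G x y a -> edge G x y.
Proof.
  intros [h1 h2]. destruct (box_prop G a) as [_ [_ He]]. apply He; [apply h1|apply h2]; auto.
Qed.

Lemma isE_inj G x y x' y' a : isE G x y a -> isE G x' y' a -> x = x' /\ y = y'.
Proof.
  intros [h1 h2] [k1 k2]. split.
  - symmetry; apply h1, k1; auto.
  - symmetry; apply h2, k2; auto.
Qed.

Lemma isE_eq G x y a b : isE G x y a -> isE G x y b -> a = b.
Proof.
  intros [h1 h2] [k1 k2]. apply box_ext; intro z; [rewrite h1, k1|rewrite h2, k2]; tauto.
Qed.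

Lemma minimal_isE G (a : box G) : minimal (box_le G) a <-> exists x y, isE G x y a.
Proof.
  split.
  - intro Hm. destruct (box_prop G a) as [[x hx] [[y hy] He]].
    pose (b := sing_box G x y (He x y hx hy)).
    assert (box_le G b a) as Hb.
    { split; simpl; intros z ->; auto. }
    apply Hm in Hb. exists x, y. rewrite <- Hb. apply isE_sing.
  - intros [x [y [h1 h2]]] b [l1 l2].
    destruct (box_prop G b) as [[x0 hx] [[y0 hy] _]].
    assert (x0 = x) as ex by (apply h1, l1; auto).
    assert (y0 = y) as ey by (apply h2, l2; auto). subst.
    apply box_ext; intro z; split; intro hz; auto.
    + apply h1 in hz; subst; auto.
    + apply h2 in hz; subst; auto.
Qed.

Lemma M_isE G x y n (h : isE G x y n) b z :
  M G (b, z) n <-> (if b then z = x else z = y).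
Proof.
  unfold M; simpl. destruct b; split.
  - intros [y' h']. apply (isE_inj G _ _ _ _ n h' h).
  - intros ->. exists y; auto.
  - intros [x' h']. apply (isE_inj G _ _ _ _ n h' h).
  - intros ->. exists x; auto.
Qed.

Lemma M_min G w n : M G w n -> exists x y, isE G x y n.
Proof. destruct w as [[|] z]; intros [y' h]; simpl in h; eauto. Qed.

Lemma M_nonempty G (hG : no_isolated G) w : exists n, M G w n.
Proof.
  destruct w as [[|] x]; destruct (hG x) as [y e].
  - exists (sing_box G x y e). exists y. apply isE_sing.
  - exists (sing_box G y x (edge_sym G x y e)). exists y. apply isE_sing.
Qed.

Lemma share_adj G w m m' : M G w m -> M G w m' -> m <> m' -> adj (box_le G) m m'.
Proof.
  intros Hm Hm' ne.
  split; [apply minimal_isE; eapply M_min; eauto|].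
  split; [apply minimal_isE; eapply M_min; eauto|].
  split; [auto|].
  destruct w as [[|] x]; destruct Hm as [y hm], Hm' as [y' hm']; simpl in *.
  - assert (y <> y') by (intro; subst; apply ne; eapply isE_eq; eauto).
    pose proof (isE_edge _ _ _ _ hm). pose proof (isE_edge _ _ _ _ hm').
    assert (hc : (exists z, z = x) /\ (exists z, z = y \/ z = y') /\
                 (forall a b, a = x -> (b = y \/ b = y') -> edge G a b))
      by (split; eauto; split; eauto; intros a b -> [-> | ->]; auto).
    exists (mkbox G _ _ hc).
    pose proof hm as [a1 a2]; pose proof hm' as [b1 b2].
    split; [split; simpl; intros z hz; [apply a1 in hz | apply a2 in hz]; auto|].
    split; [split; simpl; intros z hz; [apply b1 in hz | apply b2 in hz]; auto|].
    intros n mn [l1 l2]. apply minimal_isE in mn. destruct mn as [p [q hn]].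
    pose proof hn as [c1 c2]. simpl in l1, l2.
    assert (p = x) by (apply l1, c1; auto).
    assert (q = y \/ q = y') as [|] by (apply l2, c2; auto); subst;
      [left|right]; eapply isE_eq; eauto.
  - assert (y <> y') by (intro; subst; apply ne; eapply isE_eq; eauto).
    pose proof (isE_edge _ _ _ _ hm). pose proof (isE_edge _ _ _ _ hm').
    assert (hc : (exists z, z = y \/ z = y') /\ (exists z, z = x) /\
                 (forall a b, (a = y \/ a = y') -> b = x -> edge G a b))
      by (split; eauto; split; eauto; intros a b [-> | ->] ->; auto).
    exists (mkbox G _ _ hc).
    pose proof hm as [a1 a2]; pose proof hm' as [b1 b2].
    split; [split; simpl; intros z hz; [apply a1 in hz | apply a2 in hz]; auto|].
    split; [split; simpl; intros z hz; [apply b1 in hz | apply b2 in hz]; auto|].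
    intros n mn [l1 l2]. apply minimal_isE in mn. destruct mn as [p [q hn]].
    pose proof hn as [c1 c2]. simpl in l1, l2.
    assert (q = x) by (apply l2, c2; auto).
    assert (p = y \/ p = y') as [|] by (apply l1, c1; auto); subst;
      [left|right]; eapply isE_eq; eauto.
Qed.

Lemma adj_share G m m' : adj (box_le G) m m' -> exists w, M G w m /\ M G w m'.
Proof.
  intros [mm [mm' [ne [c [[l1 l2] [[k1 k2] hc]]]]]].
  apply minimal_isE in mm, mm'. destruct mm as [x [y hm]], mm' as [x' [y' hm']].
  destruct (classic (x = x')) as [ex|ex].
  { subst. exists (true, x'). rewrite !(M_isE _ _ _ _ hm), !(M_isE _ _ _ _ hm'); auto. }
  destruct (classic (y = y')) as [ey|ey].
  { subst. exists (false, y'). rewrite !(M_isE _ _ _ _ hm), !(M_isE _ _ _ _ hm'); auto. }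
  exfalso.
  destruct (box_prop G c) as [_ [_ He]].
  pose proof hm as [a1 a2]; pose proof hm' as [b1 b2].
  assert (edge G x y') as e by (apply He; [apply l1, a1 | apply k2, b2]; auto).
  pose (n := sing_box G x y' e).
  assert (minimal (box_le G) n) as mn by (apply minimal_isE; exists x, y'; apply isE_sing).
  assert (box_le G n c) as ln.
  { split; simpl; intros z ->; [apply l1, a1 | apply k2, b2]; auto. }
  destruct (hc n mn ln) as [e'|e'].
  - apply ey. pose proof (isE_sing G x y' e) as hs. fold n in hs. rewrite e' in hs.
    destruct (isE_inj _ _ _ _ _ _ hm hs); auto.
  - apply ex. pose proof (isE_sing G x y' e) as hs. fold n in hs. rewrite e' in hs.
    destruct (isE_inj _ _ _ _ _ _ hm' hs); auto.
Qed.

Lemma tri G w u u' m m' n : M G w m -> M G w m' -> m <> m' ->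
  M G u n -> M G u m -> M G u' n -> M G u' m' -> M G w n.
Proof.
  intros Hm Hm' ne H1 H2 H3 H4.
  destruct (M_min _ _ _ Hm) as [x1 [y1 h1]], (M_min _ _ _ Hm') as [x2 [y2 h2]],
    (M_min _ _ _ H1) as [a [c h]].
  assert (~ (x1 = x2 /\ y1 = y2)) as hne.
  { intros [-> ->]. apply ne. eapply isE_eq; eauto. }
  destruct w as [b z], u as [bu zu], u' as [bu' zu'].
  rewrite (M_isE _ _ _ _ h1) in Hm, H2. rewrite (M_isE _ _ _ _ h2) in Hm', H4.
  rewrite (M_isE _ _ _ _ h) in H1, H3 |- *.
  destruct b, bu, bu'; try congruence; exfalso; apply hne; split; congruence.
Qed.

Lemma M_clique G w : clique (box_le G) (M G w).
Proof.
  split.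
  - intros m Hm; apply minimal_isE; eapply M_min; eauto.
  - intros; eapply share_adj; eauto.
Qed.

Lemma C3a G (hG : no_isolated G) w : star (box_le G) (M G w).
Proof.
  split; [apply M_clique|].
  destruct (classic (exists m m', M G w m /\ M G w m' /\ m <> m')) as [Hex|Hno].
  - left. split; [exact Hex|]. destruct Hex as [m [m' [Hm [Hm' ne]]]].
    intros T [Tmin Tadj] HST n Tn.
    destruct (classic (M G w n)) as [|Hn]; [auto|exfalso].
    assert (n <> m) as n1 by (intro; subst; contradiction).
    assert (n <> m') as n2 by (intro; subst; contradiction).
    destruct (adj_share _ _ _ (Tadj _ _ Tn (HST _ Hm) n1)) as [u [u1 u2]].
    destruct (adj_share _ _ _ (Tadj _ _ Tn (HST _ Hm') n2)) as [u' [u1' u2']].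
    apply Hn. apply (tri G w u u' m m' n); auto.
  - right. destruct (M_nonempty G hG w) as [m Hm]. exists m. split.
    + intro n; split; [|intros ->; auto].
      intro Hn. apply NNPP; intro ne. apply Hno. exists n, m; auto.
    + intros [m1 [m2 [a1 [a2 [ne na]]]]]. apply na.
      pose proof a1 as [_ [_ [ne1 _]]]. pose proof a2 as [_ [_ [ne2 _]]].
      destruct (adj_share _ _ _ a1) as [u1 [k1 l1]].
      destruct (adj_share _ _ _ a2) as [u2 [k2 l2]].
      assert (~ M G w m1) as nm1 by (intro H; apply ne1; apply NNPP; intro e; apply Hno; exists m, m1; auto).
      assert (~ M G w m2) as nm2 by (intro H; apply ne2; apply NNPP; intro e; apply Hno; exists m, m2; auto).
      assert (u1 = u2) as eu.
      { destruct (M_min _ _ _ Hm) as [x [y h]].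
        destruct w as [b z], u1 as [b1 z1], u2 as [b2 z2].
        rewrite (M_isE _ _ _ _ h) in Hm, k1, k2.
        destruct b, b1, b2; try congruence; subst; contradiction. }
      subst. eapply share_adj; eauto.
Qed.

Lemma C3b G S : star (box_le G) S -> exists w, S = M G w.
Proof.
  intros [[Smin Sadj] [[[m [m' [Hm [Hm' ne]]]] Hmax] | [m [Hs Hleaf]]]].
  - destruct (adj_share _ _ _ (Sadj _ _ Hm Hm' ne)) as [w [k1 k2]].
    assert (sub : forall n, S n -> M G w n).
    { intros n Sn. destruct (classic (n = m)) as [->|n1]; auto.
      destruct (classic (n = m')) as [->|n2]; auto.
      destruct (adj_share _ _ _ (Sadj _ _ Sn Hm n1)) as [u [u1 u2]].
      destruct (adj_share _ _ _ (Sadj _ _ Sn Hm' n2)) as [u' [u1' u2']].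
      apply (tri G w u u' m m' n); auto. }
    exists w. apply functional_extensionality; intro n; apply propositional_extensionality; split; auto.
    apply (Hmax _ (M_clique G w) sub).
  - assert (S m) as Sm by (apply Hs; auto).
    pose proof (Smin m Sm) as mm. apply minimal_isE in mm. destruct mm as [x [y h]].
    destruct (classic (exists y1, edge G x y1 /\ y1 <> y)) as [[y1 [e1 n1]]|N1].
    + destruct (classic (exists x1, edge G x1 y /\ x1 <> x)) as [[x1 [e2 n2]]|N2].
      * exfalso. apply Hleaf.
        pose proof (isE_sing G x y1 e1) as hs1. pose proof (isE_sing G x1 y e2) as hs2.
        exists (sing_box G x y1 e1), (sing_box G x1 y e2).
        split; [apply (share_adj G (true, x)); [rewrite (M_isE _ _ _ _ h); auto | rewrite (M_isE _ _ _ _ hs1); auto | intro e; rewrite e in h; destruct (isE_inj _ _ _ _ _ _ h hs1); congruence]|].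
        split; [apply (share_adj G (false, y)); [rewrite (M_isE _ _ _ _ h); auto | rewrite (M_isE _ _ _ _ hs2); auto | intro e; rewrite e in h; destruct (isE_inj _ _ _ _ _ _ h hs2); congruence]|].
        split; [intro e; rewrite e in hs1; destruct (isE_inj _ _ _ _ _ _ hs1 hs2); congruence|].
        intro A. destruct (adj_share _ _ _ A) as [[bu zu] [p q]].
        rewrite (M_isE _ _ _ _ hs1) in p. rewrite (M_isE _ _ _ _ hs2) in q.
        destruct bu; congruence.
      * exists (false, y). apply functional_extensionality; intro n; apply propositional_extensionality.
        rewrite Hs. split.
        -- intros ->. rewrite (M_isE _ _ _ _ h). auto.
        -- intros Hn. destruct (M_min _ _ _ Hn) as [a [c hn]].
           rewrite (M_isE _ _ _ _ hn) in Hn. simpl in Hn. subst c.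
           pose proof (isE_edge _ _ _ _ hn) as ea.
           destruct (classic (a = x)) as [->|na]; [eapply isE_eq; eauto|].
           exfalso; apply N2; eauto.
    + exists (true, x). apply functional_extensionality; intro n; apply propositional_extensionality.
      rewrite Hs. split.
      * intros ->. rewrite (M_isE _ _ _ _ h). auto.
      * intros Hn. destruct (M_min _ _ _ Hn) as [a [c hn]].
        rewrite (M_isE _ _ _ _ hn) in Hn. simpl in Hn. subst a.
        pose proof (isE_edge _ _ _ _ hn) as ea.
        destruct (classic (c = y)) as [->|nc]; [eapply isE_eq; eauto|].
        exfalso; apply N1; eauto.
Qed.

Lemma L1 G (hG : no_isolated G) w1 w2 : M G w1 = M G w2 -> fst w1 = fst w2 -> w1 = w2.
Proof.
  intros e ef. destruct (M_nonempty G hG w1) as [n Hn].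
  pose proof Hn as Hn'. rewrite e in Hn'.
  destruct (M_min _ _ _ Hn) as [a [c h]].
  destruct w1 as [b1 x1], w2 as [b2 x2]. simpl in ef. subst b2.
  rewrite (M_isE _ _ _ _ h) in Hn, Hn'. destruct b1; congruence.
Qed.

Lemma L2_aux G (hG : no_isolated G) x y : M G (true, x) = M G (false, y) -> ies (box_le G) (M G (true, x)).
Proof.
  intro e. destruct (M_nonempty G hG (true, x)) as [n0 H0].
  pose proof H0 as H0'. rewrite e in H0'.
  destruct (M_min _ _ _ H0) as [a [c h]].
  rewrite (M_isE _ _ _ _ h) in H0, H0'. simpl in H0, H0'. subst a c.
  exists n0. split.
  - intro n; split; [|intros ->; rewrite (M_isE _ _ _ _ h); auto].
    intro Hn. pose proof Hn as Hn'. rewrite e in Hn'.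
    destruct (M_min _ _ _ Hn) as [a [c hn]].
    rewrite (M_isE _ _ _ _ hn) in Hn, Hn'. simpl in Hn, Hn'. subst a c.
    eapply isE_eq; eauto.
  - intros [n A]. pose proof A as [_ [_ [ne _]]]. apply ne.
    destruct (adj_share _ _ _ A) as [[bu zu] [p q]].
    assert (M G (true, x) n) as Hn.
    { rewrite (M_isE _ _ _ _ h) in p. destruct bu; simpl in p; subst zu; [auto|rewrite e; auto]. }
    destruct (M_min _ _ _ Hn) as [a [c hn]]. pose proof Hn as Hn'. rewrite e in Hn'.
    rewrite (M_isE _ _ _ _ hn) in Hn, Hn'. simpl in Hn, Hn'. subst a c.
    eapply isE_eq; eauto.
Qed.

Lemma L2 G (hG : no_isolated G) w1 w2 : M G w1 = M G w2 -> w1 <> w2 -> ies (box_le G) (M G w1).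
Proof.
  intros e ne. destruct w1 as [b1 x1], w2 as [b2 x2].
  destruct (bool_dec b1 b2) as [eb|eb].
  { exfalso; apply ne; apply (L1 G hG); auto. }
  destruct b1, b2; try congruence.
  - apply (L2_aux G hG x1 x2 e).
  - rewrite e. apply (L2_aux G hG x2 x1); symmetry; auto.
Qed.

Lemma L3 G w : ies (box_le G) (M G w) -> forall b, exists w', fst w' = b /\ M G w' = M G w.
Proof.
  intros [m [Hm Hn]] b.
  assert (M G w m) as Mm by (apply Hm; auto).
  destruct (M_min _ _ _ Mm) as [x [y h]].
  assert (forall w', M G w' m -> M G w' = M G w) as key.
  { intros w' Hw'. apply functional_extensionality; intro n; apply propositional_extensionality.
    rewrite Hm. split; [|intros ->; auto].
    intro Hn'. apply NNPP; intro ne. apply Hn. exists n. apply (share_adj G w'); auto. }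
  destruct b; [exists (true, x) | exists (false, y)]; split; auto; apply key;
    rewrite (M_isE _ _ _ _ h); auto.
Qed.

Lemma L4 G v w : XE G v w <-> v <> w /\ exists m, M G v m /\ M G w m.
Proof.
  destruct v as [b x], w as [b' y]. unfold XE; simpl. split.
  - intros [nb e]. split; [congruence|].
    destruct b, b'; try congruence.
    + exists (sing_box G x y e). rewrite !(M_isE _ _ _ _ (isE_sing G x y e)); auto.
    + exists (sing_box G y x (edge_sym G x y e)).
      rewrite !(M_isE _ _ _ _ (isE_sing G y x (edge_sym G x y e))); auto.
  - intros [ne [m [p q]]]. destruct (M_min _ _ _ p) as [a [c h]].
    pose proof (isE_edge _ _ _ _ h) as ea.
    rewrite (M_isE _ _ _ _ h) in p, q.
    destruct b, b'; subst; try congruence; split; try discriminate; auto.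
    apply edge_sym; auto.
Qed.

Definition Rel (G H : graph) (Gi : box H -> box G) (v : bool * vtx G) (v' : bool * vtx H) :=
  M H v' = img Gi (M G v) /\ (ies (box_le G) (M G v) -> fst v' = fst v).

Lemma existsR G H (hG : no_isolated G) (hH : no_isolated H) F Gi
  (hi : isoP (box_le G) (box_le H) F Gi) v : exists v', Rel G H Gi v v'.
Proof.
  pose proof (tr_star _ _ F Gi hi _ (C3a G hG v)) as st.
  destruct (C3b H _ st) as [w ew].
  destruct (classic (ies (box_le G) (M G v))) as [I|NI].
  - pose proof (tr_ies _ _ F Gi hi _ I) as I'. rewrite ew in I'.
    destruct (L3 H w I' (fst v)) as [w' [f1 f2]].
    exists w'. split; [rewrite f2; auto|auto].
  - exists w. split; [auto|intro; contradiction].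
Qed.

Lemma uniqR G H (hG : no_isolated G) (hH : no_isolated H) F Gi
  (hi : isoP (box_le G) (box_le H) F Gi) v v1 v2 :
  Rel G H Gi v v1 -> Rel G H Gi v v2 -> v1 = v2.
Proof.
  intros [e1 i1] [e2 i2].
  assert (M H v1 = M H v2) as e by congruence.
  destruct (classic (ies (box_le G) (M G v))) as [I|NI].
  - apply (L1 H hH); auto. rewrite i1, i2; auto.
  - apply NNPP; intro ne. apply NI.
    pose proof (L2 H hH _ _ e ne) as I. rewrite e1 in I.
    exact (back_ies _ _ F Gi hi _ I).
Qed.

Lemma symR G H F Gi (hi : isoP (box_le G) (box_le H) F Gi) v v' :
  Rel G H Gi v v' -> Rel H G F v' v.
Proof.
  intros [e i]. split.
  - rewrite e. symmetry. apply (img_img _ _ F Gi hi).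
  - intro I. rewrite e in I. symmetry. apply i. exact (back_ies _ _ F Gi hi _ I).
Qed.

Lemma dir2 (G H : graph) : no_isolated G -> no_isolated H ->
  box_poset_iso G H -> graph_iso (tensor K2 G) (tensor K2 H).
Proof.
  intros hG hH [F [Gi hi]].
  pose proof (isoP_inv _ _ _ _ hi) as hi'.
  pose (phi := fun v => proj1_sig (constructive_indefinite_description _ (existsR G H hG hH F Gi hi v))).
  pose (psi := fun v => proj1_sig (constructive_indefinite_description _ (existsR H G hH hG Gi F hi' v))).
  assert (Rphi : forall v, Rel G H Gi v (phi v))
    by (intro v; exact (proj2_sig (constructive_indefinite_description _ (existsR G H hG hH F Gi hi v)))).
  assert (Rpsi : forall v, Rel H G F v (psi v))
    by (intro v; exact (proj2_sig (constructive_indefinite_description _ (existsR H G hH hG Gi F hi' v)))).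
  assert (k1 : forall v, psi (phi v) = v).
  { intro v. apply (uniqR H G hH hG Gi F hi' (phi v)); auto. apply (symR G H F Gi hi); auto. }
  assert (k2 : forall v, phi (psi v) = v).
  { intro v. apply (uniqR G H hG hH F Gi hi (psi v)); auto. apply (symR H G Gi F hi'); auto. }
  exists phi, psi. split; [exact k1|split; [exact k2|]].
  intros x y. rewrite !XE_eq, !L4.
  destruct (Rphi x) as [ex _], (Rphi y) as [ey _]. rewrite ex, ey. unfold img.
  destruct hi as [h1 [h2 h3]].
  split; intros [ne [m [p q]]]; split.
  - intro e; apply ne; rewrite <- (k1 x), e, k1; auto.
  - exists (F m); rewrite h1; auto.
  - intro e; apply ne; subst; auto.
  - exists (Gi m); auto.
Qed.

Theorem theorem1p1 (G H : graph) :
  no_isolated G -> no_isolated H ->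
  (graph_iso (tensor K2 G) (tensor K2 H) <-> box_poset_iso G H).
Proof.
  intros hG hH. split; [apply dir1|apply dir2; auto].
Qed.
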